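(* Let $A\in\mathbb{C}^{m\times n}$ have rank $r$, $B\in\mathbb{C}^{m\times n}$ have rank $s$, and $E=B-A$. Then $$\|B^{\dagger}-A^{\dagger}\|_{F}^{2}\leq\min\big\{\alpha_{1}+\|B^{\dagger}EA^{\dagger}\|_{F}^{2},\ \alpha_{2}+\|A^{\dagger}EB^{\dagger}\|_{F}^{2}\big\},$$ where $$\alpha_{1}:=\|A^{\dagger}\|_{2}^{2}\big(\|A^{\dagger}E\|_{F}^{2}-\|A^{\dagger}EB^{\dagger}B\|_{F}^{2}\big)+\|B^{\dagger}\|_{2}^{2}\big(\|EB^{\dagger}\|_{F}^{2}-\|AA^{\dagger}EB^{\dagger}\|_{F}^{2}\big),$$ $$\alpha_{2}:=\|A^{\dagger}\|_{2}^{2}\big(\|EA^{\dagger}\|_{F}^{2}-\|BB^{\dagger}EA^{\dagger}\|_{F}^{2}\big)+\|B^{\dagger}\|_{2}^{2}\big(\|B^{\dagger}E\|_{F}^{2}-\|B^{\dagger}EA^{\dagger}A\|_{F}^{2}\big).$$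
   Context: $M^{\dagger}$ denotes the Moore–Penrose inverse of $M$, $\|\cdot\|_{2}$ the spectral norm and $\|\cdot\|_{F}$ the Frobenius norm. *)

(* Defs.v *)
From HB Require Import structures.
From mathcomp Require Import all_boot all_order all_algebra.
From mathcomp Require Import all_classical all_reals.
From mathcomp.real_closed Require Import complex.
Set Implicit Arguments. Unset Strict Implicit. Unset Printing Implicit Defensive.
Import Order.TTheory GRing.Theory Num.Theory.
Local Open Scope ring_scope.
Local Open Scope classical_set_scope.

Definition ctrmx (R : realType) m n (M : 'M[R[i]]_(m, n)) : 'M[R[i]]_(n, m) :=
  map_mx (fun z => z^*) M^T.

Definition penrose (R : realType) m n (A : 'M[R[i]]_(m, n)) (X : 'M[R[i]]_(n, m)) : Prop :=
  [/\ A *m X *m A = A, X *m A *m X = X,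
      ctrmx (A *m X) = A *m X & ctrmx (X *m A) = X *m A].

(* Moore--Penrose inverse: the (unique, always existing) matrix satisfying the
   Penrose equations, chosen by classical description. *)
Definition mpinv (R : realType) m n (A : 'M[R[i]]_(m, n)) : 'M[R[i]]_(n, m) :=
  xget 0 (penrose A).

Definition fro2 (R : realType) m n (M : 'M[R[i]]_(m, n)) : R :=
  \sum_(i < m) \sum_(j < n) (Normc.normc (M i j)) ^+ 2.

Definition vnorm (R : realType) n (x : 'cV[R[i]]_n) : R := Num.sqrt (fro2 x).

Definition spec (R : realType) m n (M : 'M[R[i]]_(m, n)) : R :=
  sup [set vnorm (M *m x) | x in [set x : 'cV[R[i]]_n | vnorm x = 1]].

(* Main.v *)
Require Import Defs.
From HB Require Import structures.
From mathcomp Require Import all_boot all_order all_algebra.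
From mathcomp Require Import all_classical all_reals.
From mathcomp.real_closed Require Import complex.
From mathcomp Require Import ring lra.
Import Order.TTheory GRing.Theory Num.Theory.
Set Implicit Arguments. Unset Strict Implicit.
Local Open Scope complex_scope.
Local Open Scope ring_scope.

Section Basic.
Variable R : realType.
Local Notation C := R[i].

Lemma ctrmxE m n (M : 'M[C]_(m, n)) : ctrmx M = map_mx conjc M^T.
Proof. by []. Qed.

Lemma ctrmx_entry m n (M : 'M[C]_(m, n)) i j : ctrmx M i j = (M j i)^*%C.
Proof. by rewrite ctrmxE !mxE. Qed.

Lemma ctrmxK m n (M : 'M[C]_(m, n)) : ctrmx (ctrmx M) = M.
Proof. by apply/matrixP => i j; rewrite !ctrmx_entry conjcK. Qed.

Lemma ctrmxM m n p (A : 'M[C]_(m, n)) (B : 'M[C]_(n, p)) :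
  ctrmx (A *m B) = ctrmx B *m ctrmx A.
Proof. by rewrite !ctrmxE trmx_mul map_mxM. Qed.

Lemma ctrmxD m n (A B : 'M[C]_(m, n)) : ctrmx (A + B) = ctrmx A + ctrmx B.
Proof. by rewrite !ctrmxE linearD map_mxD. Qed.

Lemma ctrmxN m n (A : 'M[C]_(m, n)) : ctrmx (- A) = - ctrmx A.
Proof. by rewrite !ctrmxE linearN map_mxN. Qed.

Lemma ctrmxB m n (A B : 'M[C]_(m, n)) : ctrmx (A - B) = ctrmx A - ctrmx B.
Proof. by rewrite ctrmxD ctrmxN. Qed.

Lemma ctrmx1 n : ctrmx (1%:M : 'M[C]_n) = 1%:M.
Proof. by rewrite ctrmxE trmx1 map_mx1. Qed.

Lemma ctrmx0 m n : ctrmx (0 : 'M[C]_(m,n)) = 0.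
Proof. by rewrite ctrmxE trmx0 map_mx0. Qed.

Lemma ctrmx_inv n (A : 'M[C]_n) : ctrmx (invmx A) = invmx (ctrmx A).
Proof. by rewrite !ctrmxE trmx_inv map_invmx. Qed.

Lemma normc_sqrC (z : C) : ((Normc.normc z) ^+ 2)%:C = z * z^*%C.
Proof. by rewrite rmorphXn -sqr_normc. Qed.

Lemma fro2C m n (M : 'M[C]_(m, n)) : (fro2 M)%:C = \tr (M *m ctrmx M).
Proof.
rewrite /fro2 /mxtrace rmorph_sum; apply: eq_bigr => i _.
rewrite rmorph_sum mxE; apply: eq_bigr => j _.
by rewrite ctrmx_entry; apply: normc_sqrC. Qed.

Lemma normc_ge0 (z : C) : 0 <= Normc.normc z.
Proof. by case: z => a b; rewrite /= sqrtr_ge0. Qed.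

Lemma fro2_ge0 m n (M : 'M[C]_(m, n)) : 0 <= fro2 M.
Proof. by apply: sumr_ge0 => i _; apply: sumr_ge0 => j _; apply: sqr_ge0. Qed.

Lemma fro2_eq0 m n (M : 'M[C]_(m, n)) : fro2 M = 0 -> M = 0.
Proof.
move=> /eqP; rewrite psumr_eq0; last by move=> i _; apply: sumr_ge0 => j _; apply: sqr_ge0.
move=> /allP H; apply/matrixP => i j; rewrite mxE.
have := H i (mem_index_enum i); rewrite /= psumr_eq0; last by move=> k _; apply: sqr_ge0.
move=> /allP /(_ j (mem_index_enum j)) /=; rewrite sqrf_eq0 => /eqP.
exact: Normc.eq0_normc.
Qed.

Lemma fro2_ctr m n (M : 'M[C]_(m, n)) : fro2 (ctrmx M) = fro2 M.
Proof.
apply: complexI; rewrite !fro2C ctrmxK mxtrace_mulC; done.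
Qed.

Lemma fro2N m n (M : 'M[C]_(m, n)) : fro2 (- M) = fro2 M.
Proof. by apply: complexI; rewrite !fro2C ctrmxN mulmxN mulNmx opprK. Qed.

End Basic.

Section MP.
Variable R : realType.
Local Notation C := R[i].

Lemma unit_mulctr (p q : nat) (M : 'M[C]_(p, q)) : row_free M -> M *m ctrmx M \in unitmx.
Proof.
move=> fM; rewrite -row_free_unit; apply: inj_row_free => v Hv.
have N0 : v *m M = 0.
  apply: fro2_eq0; apply: complexI; rewrite fro2C ctrmxM mulmxA -(mulmxA v) Hv.
  by rewrite mul0mx mxtrace0.
by apply: (row_free_inj fM); rewrite /= N0 mul0mx.
Qed.

Lemma mp_exists_fact m n r (F : 'M[C]_(m, r)) (G : 'M[C]_(r, n)) :
  row_free G -> row_free (ctrmx F) -> exists X, penrose (F *m G) X.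
Proof.
move=> fG fF.
have uG := unit_mulctr fG.
have uF := unit_mulctr fF; rewrite ctrmxK in uF.
have [Kg eKg] : {Kg | Kg = invmx (G *m ctrmx G)} by eexists.
have [Kf eKf] : {Kf | Kf = invmx (ctrmx F *m F)} by eexists.
have cKg : ctrmx Kg = Kg by rewrite eKg ctrmx_inv ctrmxM ctrmxK.
have cKf : ctrmx Kf = Kf by rewrite eKf ctrmx_inv ctrmxM ctrmxK.
have hG p (Y : 'M_(_, p)) : G *m (ctrmx G *m (Kg *m Y)) = Y.
  by rewrite eKg !mulmxA mulmxV // mul1mx.
have hF p (Y : 'M_(_, p)) : Kf *m (ctrmx F *m (F *m Y)) = Y.
  by rewrite eKf (mulmxA (ctrmx F)) mulmxA mulVmx // mul1mx.
exists (ctrmx G *m Kg *m Kf *m ctrmx F).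
have eAX : F *m G *m (ctrmx G *m Kg *m Kf *m ctrmx F) = F *m Kf *m ctrmx F.
  by rewrite -!mulmxA hG.
have eXA : (ctrmx G *m Kg *m Kf *m ctrmx F) *m (F *m G) = ctrmx G *m Kg *m G.
  by rewrite -!mulmxA hF.
split.
- by rewrite eAX -!mulmxA hF.
- by rewrite eXA -!mulmxA hG.
- by rewrite eAX !ctrmxM ctrmxK cKf mulmxA.
- by rewrite eXA !ctrmxM ctrmxK cKg mulmxA.
Qed.

Lemma mp_exists m n (A : 'M[C]_(m, n)) : exists X, penrose A X.
Proof.
rewrite -(mulmx_base A); apply: mp_exists_fact; first exact: row_base_free.
rewrite /row_free ctrmxE mxrank_map mxrank_tr.
by have := col_base_full A; rewrite /row_full.
Qed.

Lemma mpinvP m n (A : 'M[C]_(m, n)) : penrose A (mpinv A).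
Proof. by apply: xgetPex; apply: mp_exists. Qed.

End MP.

Section Spec.
Variable R : realType.
Local Notation C := R[i].

Lemma rcD (a b : R) : (a + b)%:C = a%:C + b%:C :> C. Proof. exact: rmorphD. Qed.
Lemma rcB (a b : R) : (a - b)%:C = a%:C - b%:C :> C. Proof. exact: rmorphB. Qed.
Lemma rcM (a b : R) : (a * b)%:C = a%:C * b%:C :> C. Proof. exact: rmorphM. Qed.
Lemma rcX (a : R) k : (a ^+ k)%:C = a%:C ^+ k :> C. Proof. exact: rmorphXn. Qed.
Lemma rc1 : (1 : R)%:C = 1 :> C. Proof. exact: rmorph1. Qed.
Lemma rc2 : (2 : R)%:C = 2 :> C. Proof. by rewrite (rmorphMn (real_complex R)) rmorph1. Qed.
Lemma trN m (A : 'M[C]_m) : \tr (- A) = - \tr A. Proof. exact: raddfN. Qed.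

Lemma fro2_0 m n : fro2 (0 : 'M[C]_(m, n)) = 0.
Proof. by apply: complexI; rewrite fro2C mul0mx mxtrace0 rmorph0. Qed.

Lemma ctrmxZR m n (a : R) (X : 'M[C]_(m, n)) : ctrmx (a%:C *: X) = a%:C *: ctrmx X.
Proof. by rewrite !ctrmxE linearZ /= map_mxZ; congr (_ *: _); apply: conjc_real. Qed.

Lemma fro2ZR m n (a : R) (X : 'M[C]_(m, n)) : fro2 (a%:C *: X) = a ^+ 2 * fro2 X.
Proof.
apply: complexI; rewrite fro2C ctrmxZR -scalemxAl -scalemxAr !mxtraceZ -fro2C.
by rewrite rmorphM rmorphXn mulrA expr2.
Qed.

Lemma fro2DC m n (X Y : 'M[C]_(m, n)) :
  (fro2 (X + Y))%:C = (fro2 X)%:C + (fro2 Y)%:C + \tr (X *m ctrmx Y) + \tr (Y *m ctrmx X).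
Proof.
rewrite !fro2C ctrmxD mulmxDl !mulmxDr !mxtraceD.
ring.
Qed.

Lemma pyth_l m n (X Y : 'M[C]_(m, n)) : ctrmx X *m Y = 0 ->
  fro2 (X + Y) = fro2 X + fro2 Y.
Proof.
move=> H; apply: complexI; rewrite fro2DC rmorphD.
have h1 : \tr (Y *m ctrmx X) = 0 by rewrite mxtrace_mulC H mxtrace0.
have h2 : \tr (X *m ctrmx Y) = 0.
  by rewrite mxtrace_mulC -[ctrmx Y *m X]ctrmxK ctrmxM ctrmxK H ctrmx0 mxtrace0.
by rewrite h1 h2 !addr0.
Qed.

Lemma pyth_r m n (X Y : 'M[C]_(m, n)) : X *m ctrmx Y = 0 ->
  fro2 (X + Y) = fro2 X + fro2 Y.
Proof.
move=> H; apply: complexI; rewrite fro2DC rmorphD.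
have h1 : \tr (Y *m ctrmx X) = 0.
  by rewrite -[Y *m ctrmx X]ctrmxK ctrmxM ctrmxK H ctrmx0 mxtrace0.
by rewrite h1 H mxtrace0 !addr0.
Qed.

Lemma normc_sum (I : Type) (r : seq I) (F : I -> C) :
  Normc.normc (\sum_(i <- r) F i) <= \sum_(i <- r) Normc.normc (F i).
Proof.
elim/big_rec2: _ => [|i y1 y2 _ IH]; first by rewrite Normc.normc0.
by apply: le_trans (le_normcD _ _) _; rewrite lerD2l.
Qed.

Lemma le_sum_term (I : finType) (F : I -> R) (i : I) :
  (forall j, 0 <= F j) -> F i <= \sum_j F j.
Proof.
move=> H; rewrite (bigD1 i) //= lerDl; apply: sumr_ge0 => j _; exact: H.
Qed.

Lemma spec_col m n (M : 'M[C]_(m, n)) (x : 'cV[C]_n) :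
  fro2 (M *m x) <= spec M ^+ 2 * fro2 x.
Proof.
set K := \sum_(i < m) (\sum_(j < n) Normc.normc (M i j)) ^+ 2.
have hub : has_ubound [set vnorm (M *m x) | x in [set x : 'cV[C]_n | vnorm x = 1]].
  exists (Num.sqrt K) => _ [y /= y1 <-].
  have fy : fro2 y = 1.
    by rewrite -(sqr_sqrtr (fro2_ge0 y)) -/(vnorm y) y1 expr1n.
  have yk k : Normc.normc (y k 0) <= 1.
    have : Normc.normc (y k 0) ^+ 2 <= 1.
      rewrite -fy /fro2 (le_trans _ (@le_sum_term _ _ k _)) //.
      - by rewrite big_ord1.
      - by move=> j; apply: sumr_ge0 => l _; apply: sqr_ge0.
    have := normc_ge0 (y k 0); nra.
  rewrite /vnorm ler_sqrt; last by apply: sumr_ge0 => i _; apply: sqr_ge0.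
  rewrite /fro2 /K; apply: ler_sum => i _; rewrite big_ord1 mxE.
  have h1 : Normc.normc (\sum_j M i j * y j 0) <= \sum_j Normc.normc (M i j).
    apply: (le_trans (normc_sum _ _)); apply: ler_sum => j _.
    rewrite Normc.normcM; have := yk j; have := normc_ge0 (M i j).
    have := normc_ge0 (y j 0); nra.
  have := normc_ge0 (\sum_j M i j * y j 0); nra.
have [x0|xn0] := eqVneq (fro2 x) 0.
  by rewrite (fro2_eq0 x0) mulmx0 !fro2_0 mulr0.
have xpos : 0 < fro2 x by rewrite lt_def xn0 fro2_ge0.
set t := vnorm x.
have tpos : 0 < t by rewrite sqrtr_gt0.
have t2 : t ^+ 2 = fro2 x by rewrite sqr_sqrtr // fro2_ge0.
set y := (t^-1)%:C *: x.
have vy : vnorm y = 1.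
  rewrite /vnorm fro2ZR -t2 exprVn mulVf ?sqrtr1 //.
  by rewrite expf_neq0 // gt_eqF.
have le1 : vnorm (M *m y) <= spec M by apply: ub_le_sup => //; exists y.
have ge0 := sqrtr_ge0 (fro2 (M *m y)).
have e1 : fro2 (M *m y) = vnorm (M *m y) ^+ 2 by rewrite sqr_sqrtr // fro2_ge0.
have e2 : fro2 (M *m y) = (t ^+ 2)^-1 * fro2 (M *m x).
  by rewrite /y -scalemxAr fro2ZR exprVn.
have e3 : fro2 (M *m x) = fro2 x * vnorm (M *m y) ^+ 2.
  by rewrite -e1 e2 -t2 mulrA mulfV ?mul1r // expf_neq0 // gt_eqF.
rewrite e3 mulrC; apply: ler_wpM2r; first exact: ltW.
by rewrite lerXn2r // ?nnegrE //; apply: le_trans le1.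
Qed.

Lemma fro2_cols m n (X : 'M[C]_(m, n)) : fro2 X = \sum_j fro2 (col j X).
Proof.
rewrite /fro2 exchange_big; apply: eq_bigr => j _; apply: eq_bigr => i _.
by rewrite big_ord1 mxE.
Qed.

Lemma spec_left m n p (M : 'M[C]_(m, n)) (Y : 'M[C]_(n, p)) :
  fro2 (M *m Y) <= spec M ^+ 2 * fro2 Y.
Proof.
rewrite !fro2_cols mulr_sumr; apply: ler_sum => j _.
by rewrite !colE -mulmxA spec_col.
Qed.

Lemma spec_right p m n (Y : 'M[C]_(p, m)) (N : 'M[C]_(m, n)) :
  fro2 (Y *m N) <= fro2 Y * spec N ^+ 2.
Proof.
set c := spec N; set Y' := Y *m N; set W := N *m ctrmx Y'; set X := ctrmx Y.
have fW : fro2 W <= c ^+ 2 * fro2 Y' by rewrite -(fro2_ctr Y') spec_left.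
have t1 : \tr (X *m ctrmx W) = (fro2 Y')%:C.
  by rewrite fro2C /W ctrmxM ctrmxK mxtrace_mulC -mulmxA -ctrmxM.
have t2 : \tr (W *m ctrmx X) = (fro2 Y')%:C.
  by rewrite fro2C /W /X ctrmxK mxtrace_mulC mulmxA.
have key a : fro2 ((a%:C) *: X - W) = a ^+ 2 * fro2 Y + fro2 W - 2 * a * fro2 Y'.
  apply: complexI; rewrite fro2DC fro2ZR fro2N /X fro2_ctr -/X.
  rewrite ctrmxN mulmxN trN ctrmxZR mulNmx trN -scalemxAl -scalemxAr !mxtraceZ t1 t2.
  rewrite !(rcB, rcD, rcM, rcX) rc1; ring.
have k2 := key (c ^+ 2); have := fro2_ge0 ((c ^+ 2)%:C *: X - W); rewrite k2 => H.
have [c0|cn0] := eqVneq (c ^+ 2) 0.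
  rewrite c0 mulr0; rewrite c0 mul0r in fW.
  have W0 : W = 0 by apply: fro2_eq0; apply/eqP; rewrite eq_le fW fro2_ge0.
  have : (fro2 Y')%:C = 0 by rewrite -t1 W0 ctrmx0 mulmx0 mxtrace0.
  by move=> h; have -> : fro2 Y' = 0 by apply: complexI; rewrite h.
have cpos : 0 < c ^+ 2 by rewrite lt_def cn0 sqr_ge0.
have hY := fro2_ge0 Y; have hY' := fro2_ge0 Y'.
rewrite mulrC; rewrite -(ler_pM2l cpos); nra.
Qed.

End Spec.

Section Main.
Variable R : realType.
Local Notation C := R[i].

Lemma zmod_id (V : zmodType) (q p a b : V) : q - p = - (a - b) + (q - b) + - (p - a).
Proof.
by rewrite !opprB [b - a + _]addrC !subrKA.
Qed.

Lemma split_sub (V : zmodType) (x y : V) : x + (y - x) = y.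
Proof. by rewrite addrC subrK. Qed.

Lemma ctr_proj m n (A : 'M[C]_(m, n)) P : ctrmx (A *m P) = A *m P ->
  ctrmx (1%:M - A *m P) = 1%:M - A *m P.
Proof. by move=> h; rewrite ctrmxB ctrmx1 h. Qed.

Lemma main_bound m n (A B : 'M[C]_(m, n)) P Q : penrose A P -> penrose B Q ->
  fro2 (Q - P) <=
    spec P ^+ 2 * (fro2 (P *m (B - A)) - fro2 (P *m (B - A) *m Q *m B))
    + spec Q ^+ 2 * (fro2 ((B - A) *m Q) - fro2 (A *m P *m (B - A) *m Q))
    + fro2 (Q *m (B - A) *m P).
Proof.
case=> hA1 hA2 hA3 hA4 [hB1 hB2 hB3 hB4].
have [E eE] : {E | E = B - A} by eexists.
rewrite -eE.
have eB : B = A + E by rewrite eE addrC subrK.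
have eA : A = B - E by rewrite eE opprB addrC subrK.
have dA1 : ctrmx A *m (A *m P) = ctrmx A by rewrite -{1}hA3 -ctrmxM hA1.
have dB2 : (Q *m B) *m ctrmx B = ctrmx B by rewrite -{1}hB4 -ctrmxM mulmxA hB1.
have dQ1 : Q = Q *m ctrmx Q *m ctrmx B by rewrite -mulmxA -ctrmxM hB3 mulmxA hB2.
have dP2 : P = ctrmx A *m ctrmx P *m P by rewrite -ctrmxM hA4 hA2.
have dQ3 : ctrmx Q *m (1%:M - Q *m B) = 0.
  have e : ctrmx Q = ctrmx Q *m (Q *m B) by rewrite -hB4 -ctrmxM hB2.
  by rewrite mulmxBr mulmx1 -e subrr.
have dP3 : A *m P *m (1%:M - A *m P) = 0.
  by rewrite mulmxBr mulmx1 mulmxA hA1 subrr.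
have dP3' : P *m (1%:M - A *m P) = 0.
  by rewrite mulmxBr mulmx1 mulmxA hA2 subrr.
have dQ4 : Q *m B *m (1%:M - Q *m B) = 0.
  by rewrite mulmxBr mulmx1 mulmxA hB2 subrr.
have cAP := ctr_proj hA3.
have cQB := ctr_proj hB4.
set T1 := - (Q *m E *m P).
set T2 := Q *m (1%:M - A *m P).
set T3 := - ((1%:M - Q *m B) *m P).
have dec : Q - P = T1 + T2 + T3.
  rewrite /T1 /T2 /T3 eE !mulmxBr !mulmxBl mulmx1 mul1mx ?mulmxA.
  exact: zmod_id.
have F123 : fro2 (Q - P) = fro2 (Q *m E *m P) + fro2 T2 + fro2 ((1%:M - Q *m B) *m P).
  rewrite dec pyth_l; last first.
    have -> : T1 + T2 = Q *m (- (E *m P) + (1%:M - A *m P)).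
      by rewrite /T1 /T2 [in RHS]mulmxDr [in RHS]mulmxN mulmxA.
    by rewrite ctrmxM /T3 mulmxN -mulmxA (mulmxA (ctrmx Q)) dQ3 mul0mx mulmx0 ?oppr0.
  rewrite pyth_r; last first.
    by rewrite /T1 /T2 ctrmxM cAP mulNmx -!mulmxA (mulmxA P) dP3' !(mul0mx, mulmx0) oppr0.
  by rewrite /T1 /T3 !fro2N.
have eT2 : T2 = Q *m ctrmx ((1%:M - A *m P) *m (E *m Q)).
  rewrite /T2 !ctrmxM cAP {1}dQ1 eB ctrmxD -!mulmxA; congr (_ *m (_ *m _)).
  by rewrite mulmxDl [X in X + _]mulmxBr mulmx1 dA1 subrr add0r.
have hT2 : fro2 T2 <= spec Q ^+ 2 * (fro2 (E *m Q) - fro2 (A *m P *m E *m Q)).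
  rewrite eT2; apply: (le_trans (spec_left _ _)); rewrite fro2_ctr.
  have -> : fro2 (E *m Q) = fro2 (A *m P *m (E *m Q)) + fro2 ((1%:M - A *m P) *m (E *m Q)).
    rewrite -pyth_l; first by rewrite -mulmxDl split_sub mul1mx.
    by rewrite ctrmxM hA3 -!mulmxA (mulmxA A) (mulmxA (A *m P)) dP3 mul0mx mulmx0.
  by rewrite !mulmxA [fro2 _ + fro2 _]addrC addrK.
have eT3 : (1%:M - Q *m B) *m P = - (ctrmx (P *m E *m (1%:M - Q *m B)) *m P).
  rewrite !ctrmxM cQB {1}dP2 eA ctrmxB !mulmxA mulmxBr.
  have dB2' : (1%:M - Q *m B) *m ctrmx B = 0 by rewrite mulmxBl mul1mx dB2 subrr.
  by rewrite dB2' sub0r !mulNmx.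
have hT3 : fro2 ((1%:M - Q *m B) *m P) <=
    spec P ^+ 2 * (fro2 (P *m E) - fro2 (P *m E *m Q *m B)).
  rewrite eT3 fro2N mulrC; apply: (le_trans (spec_right _ _)); rewrite fro2_ctr.
  apply: ler_wpM2r; first exact: sqr_ge0.
  have -> : fro2 (P *m E) = fro2 (P *m E *m (Q *m B)) + fro2 (P *m E *m (1%:M - Q *m B)).
    rewrite -pyth_r; first by rewrite -mulmxDr split_sub mulmx1.
    by rewrite ctrmxM cQB -!mulmxA (mulmxA Q) (mulmxA (Q *m B)) dQ4 !(mul0mx, mulmx0).
  by rewrite !mulmxA [fro2 _ + fro2 _]addrC addrK.
rewrite F123; lra.
Qed.

End Main.

Unset Implicit Arguments.

Theorem theorem3p2 (R : realType) (m n r s : nat) (A B : 'M[R[i]]_(m, n)) :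
  \rank A = r -> \rank B = s ->
  let E := B - A in
  let alpha1 :=
    spec (mpinv A) ^+ 2 * (fro2 (mpinv A *m E) - fro2 (mpinv A *m E *m mpinv B *m B))
    + spec (mpinv B) ^+ 2 * (fro2 (E *m mpinv B) - fro2 (A *m mpinv A *m E *m mpinv B)) in
  let alpha2 :=
    spec (mpinv A) ^+ 2 * (fro2 (E *m mpinv A) - fro2 (B *m mpinv B *m E *m mpinv A))
    + spec (mpinv B) ^+ 2 * (fro2 (mpinv B *m E) - fro2 (mpinv B *m E *m mpinv A *m A)) in
  fro2 (mpinv B - mpinv A) <=
    Num.min (alpha1 + fro2 (mpinv B *m E *m mpinv A))
            (alpha2 + fro2 (mpinv A *m E *m mpinv B)).
Proof.
move=> _ _; cbv zeta.
have h1 := main_bound (mpinvP A) (mpinvP B).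
have h2 := main_bound (mpinvP B) (mpinvP A).
move: h2; set P := mpinv A; set Q := mpinv B => h2.
have eAB : A - B = - (B - A) by rewrite opprB.
rewrite eAB !(mulmxN, mulNmx) !fro2N -[P - Q]opprB fro2N in h2.
rewrite le_min; apply/andP; split; first exact: h1.
apply: (le_trans h2); rewrite [spec Q ^+ 2 * _ + _]addrC.
exact: lexx.
Qed.
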